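(* Let $I$ be an inverse semigroup generated by $k$ elements, and suppose there is a surjective idempotent-pure morphism from $I$ onto a finite semigroup $J$ of cardinality $n$. Then $|I|\le n(2^{kn}-1)$. *)

(* Defs.v *)
From mathcomp Require Import all_boot.
From Stdlib Require List.
Set Implicit Arguments. Unset Strict Implicit. Unset Printing Implicit Defensive.

Definition associative_op (T : Type) (mul : T -> T -> T) : Prop :=
  forall x y z, mul x (mul y z) = mul (mul x y) z.

Definition is_inverse (T : Type) (mul : T -> T -> T) (x y : T) : Prop :=
  mul (mul x y) x = x /\ mul (mul y x) y = y.

Definition inverse_semigroup (T : Type) (mul : T -> T -> T) : Prop :=
  associative_op mul /\ forall x, exists! y, is_inverse mul x y.

Definition idempotent_el (T : Type) (mul : T -> T -> T) (e : T) : Prop :=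
  mul e e = e.

Inductive generated (T : Type) (mul : T -> T -> T) (k : nat) (g : 'I_k -> T)
  : T -> Prop :=
| gen_base : forall i, generated mul g (g i)
| gen_mul : forall x y, generated mul g x -> generated mul g y ->
            generated mul g (mul x y)
| gen_inv : forall x y, generated mul g x -> is_inverse mul x y ->
            generated mul g y.

Definition generates (T : Type) (mul : T -> T -> T) (k : nat) (g : 'I_k -> T) : Prop :=
  forall x, generated mul g x.

Definition is_morphism (A B : Type) (mulA : A -> A -> A) (mulB : B -> B -> B)
  (f : A -> B) : Prop :=
  forall x y, f (mulA x y) = mulB (f x) (f y).

Definition idempotent_pure (A B : Type) (mulA : A -> A -> A) (mulB : B -> B -> B)
  (f : A -> B) : Prop :=
  forall x, idempotent_el mulB (f x) -> idempotent_el mulA x.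

(* Main.v *)
Require Import Defs.
From mathcomp Require Import all_boot.
From Stdlib Require List.
From Stdlib Require Import ClassicalEpsilon.

Section InvSemi.
Variables (I : Type) (m : I -> I -> I).
Hypothesis invS : inverse_semigroup m.
Local Notation "x ** y" := (m x y) (at level 40, left associativity).

Lemma mA x y z : x ** (y ** z) = x ** y ** z.
Proof. exact: (proj1 invS). Qed.

Lemma inv_ex x : {y | unique (is_inverse m x) y}.
Proof. apply: constructive_indefinite_description; exact: (proj2 invS x). Qed.

Definition inv x := proj1_sig (inv_ex x).

Lemma invP x : is_inverse m x (inv x).
Proof. rewrite /inv; case: (inv_ex x) => y [] //. Qed.

Lemma inv_uniq x y : is_inverse m x y -> inv x = y.
Proof. rewrite /inv; case: (inv_ex x) => z [_ H] /= /H //. Qed.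

Lemma mulKV x : x ** inv x ** x = x. Proof. exact: (proj1 (invP x)). Qed.
Lemma invKV x : inv x ** x ** inv x = inv x. Proof. exact: (proj2 (invP x)). Qed.

Lemma invK x : inv (inv x) = x.
Proof. apply: inv_uniq; split; [exact: invKV | exact: mulKV]. Qed.

Definition idem e := e ** e = e.

Lemma inv_idem e : idem e -> inv e = e.
Proof. move=> He; apply: inv_uniq; split; by rewrite !He. Qed.

Lemma mulKVL X x : X ** x ** inv x ** x = X ** x.
Proof. by rewrite -!mA (mA x (inv x) x) mulKV. Qed.
Lemma invKVL X x : X ** inv x ** x ** inv x = X ** inv x.
Proof. by rewrite -!mA (mA (inv x) x (inv x)) invKV. Qed.

Lemma idemL e : idem e -> forall X, X ** e ** e = X ** e.
Proof. by move=> He X; rewrite -mA He. Qed.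

Lemma idem_mul e h : idem e -> idem h -> idem (e ** h).
Proof.
move=> He Hh.
set a := inv (e ** h).
have aK : e ** h ** a ** e ** h = e ** h by rewrite -(mA _ e h) mulKV.
have aK2 X : X ** a ** e ** h ** a = X ** a by rewrite -!mA [e ** (h ** a)]mA [a ** _]mA invKV.
have Ha : inv (e ** h) = h ** a ** e.
  apply: inv_uniq; split.
  - by rewrite !mA (idemL _ Hh) (idemL _ He) aK.
  - by rewrite !mA (idemL _ He) (idemL _ Hh) aK2.
have Haa : idem a.
  by rewrite /idem {1 2}/a Ha !mA aK2.
by rewrite /idem -(invK (e ** h)) -/a (inv_idem _ Haa).
Qed.

Lemma idem_comm e h : idem e -> idem h -> e ** h = h ** e.
Proof.
move=> He Hh.
have Heh := idem_mul _ _ He Hh; have Hhe := idem_mul _ _ Hh He.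
rewrite -(inv_idem _ Heh); apply: inv_uniq; split.
- by rewrite !mA (idemL _ Hh) (idemL _ He) -(mA (e ** h) e h) Heh.
- by rewrite !mA (idemL _ He) (idemL _ Hh) -(mA (h ** e) h e) Hhe.
Qed.

Definition R x := x ** inv x.
Definition D x := inv x ** x.
Lemma R_idem x : idem (R x).
Proof. by rewrite /idem /R !mA mulKV. Qed.
Lemma D_idem x : idem (D x).
Proof. by rewrite /idem /D !mA invKV. Qed.

Lemma invM x y : inv (x ** y) = inv y ** inv x.
Proof.
apply: inv_uniq; split.
- have -> : x ** y ** (inv y ** inv x) ** (x ** y) = x ** (R y ** D x) ** y
    by rewrite /R /D !mA.
  by rewrite (idem_comm _ _ (R_idem y) (D_idem x)) /R /D !mA mulKV mulKVL.
- have -> : inv y ** inv x ** (x ** y) ** (inv y ** inv x) = inv y ** (D x ** R y) ** inv x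
    by rewrite /R /D !mA.
  by rewrite -(idem_comm _ _ (R_idem y) (D_idem x)) /R /D !mA invKV invKVL.
Qed.

Definition le a b := a ** b = a.
Lemma le_trans a b c : le a b -> le b c -> le a c.
Proof. by rewrite /le => Hab Hbc; rewrite -Hab -mA Hbc. Qed.
Lemma le_refl e : idem e -> le e e. Proof. by []. Qed.

Lemma R_mul_le x y : le (R (x ** y)) (R x).
Proof. by rewrite /le /R invM !mA invKVL. Qed.

Lemma R_pref e x : idem e -> R (e ** x) = e ** R x.
Proof.
move=> He; rewrite {1}/R invM (inv_idem _ He).
have -> : e ** x ** (inv x ** e) = e ** (R x ** e) by rewrite /R !mA.
by rewrite (idem_comm _ _ (R_idem x) He) mA He.
Qed.

Lemma leR e z : idem e -> (le e (R z) <-> R (e ** z) = e).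
Proof. by move=> He; rewrite R_pref. Qed.

Lemma R_mulKV w y : R (w ** y ** inv y) = R (w ** y).
Proof. by rewrite /R !invM invK !mA mulKVL. Qed.

Variables (J : finType) (mJ : J -> J -> J) (f : I -> J).
Hypotheses (AJ : associative_op mJ) (fM : is_morphism m mJ f)
  (fP : idempotent_pure m mJ f).
Local Notation "x *J y" := (mJ x y) (at level 40, left associativity).
Lemma mAJ x y z : x *J (y *J z) = x *J y *J z. Proof. exact: AJ. Qed.

Lemma f_idem z : idem z -> f z *J f z = f z.
Proof. by move=> Hz; rewrite -fM Hz. Qed.

Lemma compat x y : f x = f y -> idem (inv y ** x).
Proof.
move=> Hxy; apply: fP; rewrite /idempotent_el fM Hxy -fM.
exact: (f_idem _ (D_idem y)).
Qed.

Lemma eq_compat x y : R x = R y -> idem (inv y ** x) -> x = y.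
Proof.
move=> HR Hh.
have Hih : inv (inv y ** x) = inv y ** x := inv_idem _ Hh.
have Ex : x = y ** (inv y ** x) by rewrite mA -/(R y) -HR /R mulKV.
have Ey : y = x ** (inv y ** x).
  by rewrite -Hih invM invK mA -/(R x) HR /R mulKV.
have Exh : x = x ** (inv y ** x) by rewrite {1}Ex {1}Ey -mA Hh.
by rewrite {1}Ey.
Qed.

Lemma Lq e p q : idem e -> le e (R p) -> le e (R q) -> f (e ** p) = f (e ** q) ->
  e ** p = e ** q.
Proof.
move=> He Hp Hq Hf; apply: eq_compat.
- by rewrite (proj1 (leR _ _ He) Hp) (proj1 (leR _ _ He) Hq).
- exact: compat.
Qed.

Lemma f_inv x y : f x = f y -> f (inv x) = f (inv y).
Proof.
move=> Hxy.
set a := f x; set b := f (inv x); set c := f (inv y).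
have h1 : b *J a *J b = b by rewrite /a /b -!fM invKV.
have h2 : a *J c *J a = a by rewrite /a Hxy /c -!fM mulKV.
have h3 : c *J a *J c = c by rewrite /a Hxy /c -!fM invKV.
have h4 : a *J b *J a = a by rewrite /a /b -!fM mulKV.
have c1 : (b *J a) *J (c *J a) = (c *J a) *J (b *J a).
  rewrite /a {2 3}Hxy /b /c -!fM.
  by rewrite (idem_comm _ _ (D_idem x) (D_idem y)).
have c2 : (a *J b) *J (a *J c) = (a *J c) *J (a *J b).
  rewrite /a {2 3}Hxy /b /c -!fM.
  by rewrite (idem_comm _ _ (R_idem x) (R_idem y)).
have Eb : b = c *J a *J b.
  transitivity (b *J (a *J c *J a) *J b); first by rewrite h2 h1.
  transitivity ((b *J a) *J (c *J a) *J b); first by rewrite !mAJ.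
  by rewrite c1 -!mAJ (mAJ b) h1 !mAJ.
have Ec : c = c *J a *J b.
  transitivity (c *J (a *J b *J a) *J c); first by rewrite h4 h3.
  transitivity (c *J ((a *J b) *J (a *J c))); first by rewrite !mAJ.
  by rewrite c2 !mAJ h3.
by rewrite Eb -Ec.
Qed.

Variables (k : nat) (g : 'I_k -> I).

Definition H v x e :=
  (forall p i, le (R x) (R (p ** g i)) ->
    exists q, le e (R (q ** g i)) /\ f (e ** q) = f (v ** p)) /\
  (forall i, le (R x) (R (g i)) ->
    exists q, le e (R (q ** g i)) /\ f (e ** q) = f v).
Definition G x := forall v e, idem e -> R v = e -> H v x e -> R (v ** x) = e.

Lemma R_conj_le z x y : le (R x) (R y) -> le (R (z ** x)) (R (z ** y)).
Proof.
rewrite /le => Hle.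
have -> : R (z ** x) ** R (z ** y) = z ** R x ** (D z ** R y) ** inv z
  by rewrite /R /D !invM !mA.
rewrite (idem_comm _ _ (D_idem z) (R_idem y)).
have -> : z ** R x ** (R y ** D z) ** inv z = z ** (R x ** R y) ** D z ** inv z
  by rewrite !mA.
by rewrite Hle /R /D invM !mA invKVL.
Qed.

Lemma G_mul a b : G a -> G b -> G (a ** b).
Proof.
move=> Ga Gb v e He Hv [H1 H2].
rewrite mA; apply: Gb => //.
  apply: Ga => //; split.
  - move=> p i Hp; apply: H1; exact: le_trans (R_mul_le a b) Hp.
  - move=> i Hp; apply: H2; exact: le_trans (R_mul_le a b) Hp.
split.
- move=> p i Hp; rewrite -mA; apply: H1; rewrite -mA; exact: R_conj_le.
- move=> i Hp; apply: H1; exact: R_conj_le.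
Qed.

Lemma G_base i : G (g i).
Proof.
move=> v e He Hv [_ H2].
have [q [Hq Hf]] := H2 i (le_refl _ (R_idem _)).
have Hqe : le e (R q) := le_trans _ _ _ Hq (R_mul_le q (g i)).
have Heq : e ** q = v.
  apply: eq_compat; last exact: compat.
  by rewrite Hv; exact/(leR _ _ He).
by rewrite -Heq -mA; exact/(leR _ _ He).
Qed.

Lemma G_baseinv i : G (inv (g i)).
Proof.
move=> v e He Hv [H1 _]; set gi := g i.
have Hp : le (R (inv gi)) (R (inv gi ** gi)).
  have E := inv_idem _ (D_idem gi); rewrite /D in E.
  have Ed : inv gi ** gi ** (inv gi ** gi) = inv gi ** gi := D_idem gi.
  by rewrite /R invK E /le Ed Ed.
have [q [Hq Hf]] := H1 (inv gi) i Hp.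
have Ha : R (e ** q ** gi) = e by rewrite -mA; exact/(leR _ _ He).
have Hz : f (inv v ** (e ** q ** gi)) = f (D v ** D gi).
  rewrite fM (fM (e ** q)) Hf /D !fM ?mAJ //.
have Hc : idem (inv v ** (e ** q ** gi)).
  apply: fP; rewrite /idempotent_el Hz.
  exact: f_idem _ (idem_mul _ _ (D_idem _) (D_idem _)).
have Heq : e ** q ** gi = v := eq_compat _ _ (etrans Ha (esym Hv)) Hc.
rewrite -Heq R_mulKV //.
Qed.

Lemma G_gen x : generated m g x -> G x /\ G (inv x).
Proof.
elim=> [i | x1 y1 _ [Gx Gxi] _ [Gy Gyi] | x1 y1 _ [Gx Gxi] Hinv].
- split; [exact: G_base | exact: G_baseinv].
- split; [exact: G_mul | rewrite invM; exact: G_mul].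
- rewrite -(inv_uniq _ _ Hinv) invK; by split.
Qed.

Definition pb (P : Prop) : bool := if excluded_middle_informative P then true else false.
Lemma pbP P : pb P = true <-> P.
Proof. by rewrite /pb; case: excluded_middle_informative. Qed.

Definition Phi x : {set J * 'I_k} :=
  [set ji | pb (exists p, le (R x) (R (p ** g ji.2)) /\ f (R x ** p) = ji.1)].

Lemma inj_core x y : generated m g x -> f x = f y -> Phi x \subset Phi y ->
  le (R y) (R x).
Proof.
move=> Hgx Hxy Hsub.
set e := R y; have He : idem e := R_idem y.
have Hfe : f (R x) = f e by rewrite /e /R !fM (f_inv _ _ Hxy) Hxy.
have Hx : H e x e.
  split.
  - move=> p i Hp.
    have : (f (R x ** p), i) \in Phi x by rewrite inE; apply/pbP; exists p.
    move/(subsetP Hsub); rewrite inE => /pbP [q [Hq Hfq]].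
    exists q; split => //; rewrite Hfq fM Hfe -fM //.
  - move=> i Hp.
    have Hp' : le (R x) (R (R x ** g i)).
      by rewrite (R_pref _ _ (R_idem x)) /le mA (R_idem x) Hp.
    have : (f (R x ** R x), i) \in Phi x by rewrite inE; apply/pbP; exists (R x).
    move/(subsetP Hsub); rewrite inE => /pbP [q [Hq Hfq]].
    exists q; split => //; rewrite Hfq (R_idem x) Hfe //.
have HRe : R e = e by rewrite /R (inv_idem _ He) He.
have := (proj1 (G_gen _ Hgx)) e e He HRe Hx.
by rewrite /le (R_pref _ _ He).
Qed.

Lemma Phi_inj x y : generated m g x -> generated m g y -> f x = f y ->
  Phi x = Phi y -> x = y.
Proof.
move=> Hgx Hgy Hxy HP.
have h1 := inj_core _ _ Hgx Hxy (ltac:(by rewrite HP subxx)).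
have h2 := inj_core _ _ Hgy (esym Hxy) (ltac:(by rewrite HP subxx)).
have HR : R x = R y.
  by rewrite -h2 (idem_comm _ _ (R_idem x) (R_idem y)) h1.
exact: eq_compat HR (compat _ _ Hxy).
Qed.

Definition N z := exists p i, le (R z) (R (p ** g i)).

Lemma N_mul x y : N x -> N (x ** y).
Proof. move=> [p [i Hp]]; exists p, i; exact: le_trans (R_mul_le x y) Hp. Qed.

Lemma N_gen x : generated m g x -> N x /\ N (inv x).
Proof.
elim=> [i | x1 y1 _ [Gx Gxi] _ [Gy Gyi] | x1 y1 _ [Gx Gxi] Hinv].
- split.
  + exists (R (g i)), i.
    have -> : R (g i) ** g i = g i by rewrite /R mulKV.
    exact: le_refl (R_idem _).
  + exists (inv (g i)), i.
    have E : R (inv (g i)) = inv (g i) ** g i by rewrite /R invK.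
    have E2 : R (inv (g i) ** g i) = inv (g i) ** g i.
      have := inv_idem _ (D_idem (g i)); rewrite /D /R => ->.
      exact: D_idem.
    rewrite E E2; exact: D_idem.
- split; [exact: N_mul | rewrite invM; exact: N_mul].
- rewrite -(inv_uniq _ _ Hinv) invK; by split.
Qed.

Lemma Phi_ne x : generated m g x -> Phi x != set0.
Proof.
move=> /N_gen [[p [i Hp]] _]; apply/set0Pn; exists (f (R x ** p), i).
by rewrite inE; apply/pbP; exists p.
Qed.
End InvSemi.


Theorem corollary3 (I : Type) (mulI : I -> I -> I) (k : nat) (g : 'I_k -> I)
  (J : finType) (mulJ : J -> J -> J) (n : nat) (f : I -> J) :
  inverse_semigroup mulI ->
  generates mulI g ->
  associative_op mulJ ->
  #|J| = n ->
  is_morphism mulI mulJ f ->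
  (forall y : J, exists x : I, f x = y) ->
  idempotent_pure mulI mulJ f ->
  forall s : list I, List.NoDup s -> List.length s <= n * (2 ^ (k * n) - 1).
Proof.
move=> invS gen AJ HJ fM _ fP s Hs.
pose psi x := (f x, Phi _ _ invS _ f _ g x).
have inj : forall x y, psi x = psi y -> x = y.
  move=> x y [] Hf HP; exact: (Phi_inj _ _ invS _ _ _ AJ fM fP _ _ _ _ (gen x) (gen y) Hf HP).
have Hin : forall a l, psi a \in map psi l -> List.In a l.
  move=> a; elim=> //= b l IH; rewrite in_cons => /orP [/eqP /inj -> | /IH]; by [left | right].
have Hu : uniq (map psi s).
  elim: Hs => //= a l Hna _ ->; rewrite andbT; apply/negP => /Hin; exact: Hna.
set A := [set t : J * {set J * 'I_k} | t.2 != set0].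
have Hall : forall l, all (fun t => t \in A) (map psi l).
  elim=> //= a l ->; rewrite andbT inE /=; exact: (Phi_ne _ _ invS _ f _ g _ (gen a)).
have Hsub : {subset map psi s <= enum A}.
  move=> t Ht; rewrite mem_enum; exact: (allP (Hall s)) t Ht.
have Hl : List.length s = size s by elim: s {Hs Hu Hsub} => //= a l ->.
rewrite Hl -(size_map psi); apply: leq_trans (uniq_leq_size Hu Hsub) _.
rewrite -cardE.
have -> : A = setX [set: J] [set~ set0] by apply/setP => -[a b]; rewrite !inE.
rewrite cardsX cardsT cardsC1 HJ.
rewrite -cardsT -powersetT card_powerset cardsT card_prod card_ord HJ.
rewrite subn1 (mulnC k n). first [exact: leqnn | exact: le_n].
Qed.
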